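(* Let $(A,\leq,\cdot,/)$ be a narhoop. Then for all $x,y,z\in A$: (N1) $(x\sqcap y)\sqcap x = x\sqcap y$; (N2) $x\leq xy/y$; (N3) $(x\sqcap y)z\leq xz$; (N4) $(x\sqcap y)/z\leq x/z$. Conversely, let $(A,\cdot,/)$ be any algebra with two binary operations satisfying the following identities, which are (N1)–(N4) with each inequality $u\le v$ written as the equation $u=v\sqcap u$: (N1) $(x\sqcap y)\sqcap x = x\sqcap y$; (N2) $x=(xy/y)\sqcap x$; (N3) $(x\sqcap y)z = xz\sqcap (x\sqcap y)z$; (N4) $(x\sqcap y)/z = (x/z)\sqcap ((x\sqcap y)/z)$. Define a relation $\leq$ on $A$ by $x\leq y$ iff $x=y\sqcap x$. Then $A$ satisfies the identities $x\sqcap (xy/y)=x$, $(x\sqcap y)/y = x/y$ and $(x\sqcap y)\sqcap y=x\sqcap y$, the relation $\leq$ is a partial order, and $(A,\leq,\cdot,/)$ is a narhoop. In particular, narhoops form a variety defined by the identities (N1)–(N4).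
   Context: For a set $A$ with binary operations $\cdot$ and $/$, write $xy$ for $x\cdot y$; the convention is that $\cdot$ binds more strongly than $/$, and $/$ binds more strongly than $\sqcap$, where $x\sqcap y := (x/y)y$. A right-residuated magma is a structure $(A,\leq,\cdot,/)$ where $(A,\leq)$ is a poset and $xy\leq z \iff x\leq z/y$ for all $x,y,z\in A$. Condition (N) on such a structure: for all $x,y$, $x\leq y \iff x=y\sqcap x$. A narhoop (nonassociative right hoop) is a right-residuated magma such that for all $x,y$: $x\leq y \iff x\sqcap y = x = y\sqcap x$ (equivalently, a right-residuated magma satisfying (N) and the identity $(x\sqcap y)\sqcap x=x\sqcap y$). *)

(* Defs.v *)
Definition meet {A : Type} (mul div : A -> A -> A) (x y : A) : A :=
  mul (div x y) y.

Definition is_partial_order {A : Type} (le : A -> A -> Prop) : Prop :=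
  (forall x, le x x) /\
  (forall x y, le x y -> le y x -> x = y) /\
  (forall x y z, le x y -> le y z -> le x z).

Definition right_residuated {A : Type} (le : A -> A -> Prop)
  (mul div : A -> A -> A) : Prop :=
  is_partial_order le /\
  (forall x y z, le (mul x y) z <-> le x (div z y)).

Definition narhoop {A : Type} (le : A -> A -> Prop)
  (mul div : A -> A -> A) : Prop :=
  right_residuated le mul div /\
  (forall x y, le x y <-> (meet mul div x y = x /\ x = meet mul div y x)).

(* Main.v *)
Require Import Defs.

Lemma part1 (A : Type) (le : A -> A -> Prop) (mul div : A -> A -> A) :
  narhoop le mul div ->
  let m := meet mul div in
  forall x y z : A,
    m (m x y) x = m x y /\
    le x (div (mul x y) y) /\
    le (mul (m x y) z) (mul x z) /\
    le (div (m x y) z) (div x z).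
Proof.
  intros [[[Rf [As Tr]] Res] Nh] m x y z. subst m. unfold meet.
  assert (Lw : forall a b, le (mul (div a b) b) a).
  { intros a b. apply Res. apply Rf. }
  assert (Mm : forall a b c, le a b -> le (mul a c) (mul b c)).
  { intros a b c H. apply Res. eapply Tr. exact H. apply Res. apply Rf. }
  split; [|split; [|split]].
  - apply (proj1 (proj1 (Nh _ _) (Lw x y))).
  - apply Res, Rf.
  - apply Mm, Lw.
  - apply Res. eapply Tr. apply Lw. apply Lw.
Qed.

Lemma part2 (A : Type) (mul div : A -> A -> A) :
  let m := meet mul div in
  (forall x y, m (m x y) x = m x y) ->
  (forall x y, x = m (div (mul x y) y) x) ->
  (forall x y z, mul (m x y) z = m (mul x z) (mul (m x y) z)) ->
  (forall x y z, div (m x y) z = m (div x z) (div (m x y) z)) ->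
  let le := fun x y : A => x = m y x in
  (forall x y, m x (div (mul x y) y) = x) /\
  (forall x y, div (m x y) y = div x y) /\
  (forall x y, m (m x y) y = m x y) /\
  is_partial_order le /\
  narhoop le mul div.
Proof.
  intros m H1 H2 H3 H4 le.
  assert (Ant : forall a b, a = m b a -> b = m a b -> a = b).
  { intros a b Ha Hb. pose proof (H1 a b) as E. rewrite <- Hb in E.
    rewrite <- Ha in E. exact E. }
  assert (Ga : forall x y, m x (div (mul x y) y) = x).
  { intros x y. pose proof (H1 (div (mul x y) y) x) as E.
    rewrite <- H2 in E. exact E. }
  assert (Gb : forall x y, div (m x y) y = div x y).
  { intros x y. apply Ant. apply H4. apply (H2 (div x y) y). }
  assert (Gc : forall x y, m (m x y) y = m x y).
  { intros x y. unfold m at 1, meet at 1. fold m. rewrite Gb. reflexivity. }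
  assert (Rf : forall x, le x x).
  { intros x. unfold le. pose proof (H2 x x) as E. pose proof (Gc (div (mul x x) x) x) as F.
    rewrite <- E in F. symmetry. exact F. }
  assert (Mm : forall a b c, le a b -> le (mul a c) (mul b c)).
  { intros a b c H. unfold le in *. pose proof (H3 b a c) as E.
    rewrite <- H in E. exact E. }
  assert (Md : forall a b c, le a b -> le (div a c) (div b c)).
  { intros a b c H. unfold le in *. pose proof (H4 b a c) as E.
    rewrite <- H in E. exact E. }
  assert (Tr : forall x y z, le x y -> le y z -> le x z).
  { intros x y z Hxy Hyz.
    pose proof (Mm _ _ x (Md _ _ x Hyz)) as E.
    change (mul (div y x) x) with (m y x) in E.
    change (mul (div z x) x) with (m z x) in E.
    rewrite <- Hxy in E. unfold le in *. rewrite Gc in E. exact E. }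
  assert (Lo : forall z y, le (m z y) z).
  { intros z y.
    pose proof (Mm _ _ z (H4 z y z : le (div (m z y) z) (div z z))) as E.
    change (mul (div (m z y) z) z) with (m (m z y) z) in E.
    change (mul (div z z) z) with (m z z) in E.
    rewrite H1 in E. rewrite <- (Rf z) in E. exact E. }
  assert (PO : is_partial_order le).
  { split; [exact Rf|split; [|exact Tr]].
    intros x y Hxy Hyx. apply Ant; assumption. }
  split; [exact Ga|split; [exact Gb|split; [exact Gc|split; [exact PO|]]]].
  split.
  - split; [exact PO|]. intros x y z. split; intro H.
    + eapply Tr. apply (H2 x y). apply Md. exact H.
    + eapply Tr. apply Mm. exact H. apply Lo.
  - intros x y. split; intro H.
    + split; [|exact H]. pose proof (H1 y x) as E. fold m.
      rewrite <- H in E. exact E.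
    + exact (proj2 H).
Qed.

Theorem mainTheorem1 :
  (forall (A : Type) (le : A -> A -> Prop) (mul div : A -> A -> A),
     narhoop le mul div ->
     let m := meet mul div in
     forall x y z : A,
       m (m x y) x = m x y /\
       le x (div (mul x y) y) /\
       le (mul (m x y) z) (mul x z) /\
       le (div (m x y) z) (div x z))
  /\
  (forall (A : Type) (mul div : A -> A -> A),
     let m := meet mul div in
     (forall x y, m (m x y) x = m x y) ->
     (forall x y, x = m (div (mul x y) y) x) ->
     (forall x y z, mul (m x y) z = m (mul x z) (mul (m x y) z)) ->
     (forall x y z, div (m x y) z = m (div x z) (div (m x y) z)) ->
     let le := fun x y : A => x = m y x in
     (forall x y, m x (div (mul x y) y) = x) /\
     (forall x y, div (m x y) y = div x y) /\
     (forall x y, m (m x y) y = m x y) /\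
     is_partial_order le /\
     narhoop le mul div).
Proof. split; [exact part1 | exact part2]. Qed.
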